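(* Let $\mathbb{K}$ be a field and $f=a_0(x)+a_1(x)y+\cdots+a_n(x)y^n\in\mathbb{K}[x,y]$ with $n\geq 2$, $a_0,\ldots,a_n\in\mathbb{K}[x]$, $a_0a_n\neq 0$. Assume that $f$ has no nonconstant factor in $\mathbb{K}[x]$. If there exists an index $j$ with $1\leq j\leq n-1$ such that $$\deg a_j>\max_{i<j}\{\deg a_i+(j-i)\deg a_n\}\quad\text{and}\quad \deg a_j>\max_{i>j}\{\deg a_i+(i-j)\deg a_0\},$$ then $f$ is a product of at most $\min\{j,n-j\}$ irreducible polynomials over $\mathbb{K}[x]$. In particular, if $j=1$ or $j=n-1$, then $f$ is irreducible over $\mathbb{K}[x]$.
   Context: Indices $i$ range over $\{0,1,\ldots,n\}$. $f$ is regarded as a polynomial in $y$ with coefficients in $\mathbb{K}[x]$; ''a product of at most $k$ irreducible polynomials over $\mathbb{K}[x]$'' means that in the factorization of $f$ into irreducible elements of $\mathbb{K}[x][y]$ the number of factors, counted with multiplicities, is at most $k$. *)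

(* Defs.v *)
From HB Require Import structures.
From mathcomp Require Import all_boot all_order all_algebra.
Set Implicit Arguments. Unset Strict Implicit. Unset Printing Implicit Defensive.
Import GRing.Theory.
Local Open Scope ring_scope.

Definition irreducible_elt (R : idomainType) (p : R) : Prop :=
  [/\ p != 0, p \isn't a GRing.unit &
      forall a b : R, p = a * b -> a \is a GRing.unit \/ b \is a GRing.unit].

Definition prod_at_most_irr (R : idomainType) (k : nat) (p : R) : Prop :=
  exists s : seq R, [/\ (size s <= k)%N, forall q, q \in s -> irreducible_elt q
                      & p = \prod_(q <- s) q].

(* degree of a nonzero polynomial (only used on nonzero polynomials) *)
Definition pdeg (R : nzRingType) (p : {poly R}) : nat := (size p).-1.

(* Main.v *)
Require Import Defs.
From mathcomp Require Import all_boot all_order all_algebra.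
From mathcomp Require Import zify.
From Stdlib Require Import Classical_Prop.
Import GRing.Theory.
Local Open Scope ring_scope.
Set Implicit Arguments. Unset Strict Implicit. Unset Printing Implicit Defensive.

Definition Sw (K : fieldType) (w : nat) (g : {poly {poly K}}) : {poly {poly K}} :=
  g \Po ('X * ('X^w)%:P).

Lemma Sw_coef (K : fieldType) (w : nat) (g : {poly {poly K}}) i :
  (Sw w g)`_i = g`_i * 'X^(i * w).
Proof.
have -> : Sw w g = \poly_(i < size g) (g`_i * 'X^(i * w)).
  rewrite /Sw comp_polyE poly_def; apply: eq_bigr => k _.
  rewrite exprMn -rmorphXn /= -exprM mulnC mulrC mul_polyC scalerA //.
rewrite coef_poly; case: ltnP => // H; by rewrite nth_default // mul0r.
Qed.

Lemma SwM (K : fieldType) (w : nat) (g h : {poly {poly K}}) : Sw w (g * h) = Sw w g * Sw w h.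
Proof. by rewrite /Sw comp_polyM. Qed.

Definition Phi (K : fieldType) (w : nat) (g : {poly {poly K}}) : {poly K} :=
  lead_coef (swapXY (Sw w g)).

Lemma PhiM (K : fieldType) (w : nat) (g h : {poly {poly K}}) : Phi w (g * h) = Phi w g * Phi w h.
Proof. by rewrite /Phi SwM rmorphM lead_coefM. Qed.

Lemma Phi1 (K : fieldType) (w : nat) : Phi w (1 : {poly {poly K}}) = 1.
Proof. by rewrite /Phi /Sw comp_polyC rmorph1 lead_coef1. Qed.

Lemma Phi_prod (K : fieldType) (w : nat) (s : seq {poly {poly K}}) :
  Phi w (\prod_(g <- s) g) = \prod_(g <- s) Phi w g.
Proof.
elim: s => [|g s IH]; first by rewrite !big_nil Phi1.
by rewrite !big_cons PhiM IH.
Qed.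

Lemma Sw_size (K : fieldType) (w : nat) (g : {poly {poly K}}) i :
  g`_i != 0 -> size (Sw w g)`_i = (i * w + size (g`_i)%R)%N.
Proof. by move=> H; rewrite Sw_coef size_mulXn. Qed.

Lemma Phi_coef (K : fieldType) (w : nat) (g : {poly {poly K}}) i :
  (Phi w g)`_i = (Sw w g)`_i`_(size (swapXY (Sw w g))).-1.
Proof. by rewrite /Phi lead_coefE coef_swapXY. Qed.

Lemma Sw_coef_le (K : fieldType) (w : nat) (g : {poly {poly K}}) i :
  (size ((Sw w g)`_i)%R <= size (swapXY (Sw w g)))%N.
Proof. by rewrite -sizeYE max_size_coefXY. Qed.

Lemma PhiA (K : fieldType) (w : nat) (g : {poly {poly K}}) :
  (1 < size g)%N -> g`_0 != 0 -> (pdeg (g`_0)%R <= w)%N -> (1 < size (Phi w g))%N.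
Proof.
move=> Hsg H0 Hd.
set v := Sw w g.
have v0 : v`_0 = g`_0 by rewrite /v Sw_coef mul0n expr0 mulr1.
have vnz : v != 0 by apply/eqP => E; move: H0; rewrite -v0 E coef0 eqxx.
have snz : swapXY v != 0 by rewrite swapXY_eq0.
have Phinz : Phi w g != 0 by rewrite /Phi lead_coef_eq0.
set T := (size (swapXY v)).-1.
have TE : size (swapXY v) = T.+1 by rewrite /T prednK // size_poly_gt0.
rewrite ltnNge; apply/negP => Hs.
have Hs1 : size (Phi w g) = 1%N.
  by apply/eqP; rewrite eqn_leq Hs size_poly_gt0.
have P0 : (Phi w g)`_0 != 0.
  by move: Phinz; rewrite -lead_coef_eq0 lead_coefE Hs1.
rewrite Phi_coef -/v -/T v0 in P0.
have HT : (T < size (g`_0)%R)%N.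
  by rewrite ltnNge; apply/negP => HH; move: P0; rewrite nth_default // eqxx.
have HTw : (T <= w)%N by move: Hd HT; rewrite /pdeg; case: (size (g`_0)%R) => [|k] /=; lia.
set m := (size g).-1.
have m1 : (1 <= m)%N by rewrite /m -ltnS prednK // ltnW.
have gm : g`_m != 0.
  by rewrite /m -lead_coefE lead_coef_eq0 -size_poly_eq0 -lt0n ltnW.
have szm := Sw_size w gm.
have le1 := Sw_coef_le w g m.
rewrite -/v szm TE in le1.
have gm1 : (0 < size (g`_m)%R)%N by rewrite size_poly_gt0.
have mw : (w <= m * w)%N by rewrite leq_pmull.
have Eq : size v`_m = T.+1.
  rewrite /v szm; apply/eqP; rewrite eqn_leq le1 /=.
  apply: leq_trans (_ : (w + 1 <= _)%N); first by rewrite addn1 ltnS.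
  by rewrite leq_add.
have Pm : (Phi w g)`_m = 0 by rewrite nth_default // Hs1.
rewrite Phi_coef -/v -/T in Pm.
have : lead_coef v`_m != 0.
  by rewrite lead_coef_eq0 -size_poly_eq0 Eq.
by rewrite lead_coefE Eq /= Pm eqxx.
Qed.

Lemma PhiB (K : fieldType) (w : nat) (f : {poly {poly K}}) (j : nat) :
  f`_j != 0 ->
  (forall i, (j < i)%N -> f`_i != 0 -> (pdeg (f`_i)%R + i * w < pdeg (f`_j)%R + j * w)%N) ->
  (size (Phi w f) <= j.+1)%N.
Proof.
move=> Hj Hi.
set v := Sw w f.
have le1 := Sw_coef_le w f j.
rewrite -/v Sw_size // in le1.
apply/leq_sizeP => i Hij; rewrite Phi_coef -/v.
have [fi0|fi] := eqVneq f`_i 0.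
  by rewrite /v Sw_coef fi0 mul0r coef0.
apply: nth_default.
have := Hi i Hij fi.
rewrite /v Sw_size //.
move: le1; rewrite /pdeg.
have : (0 < size (f`_i)%R)%N by rewrite size_poly_gt0.
have : (0 < size (f`_j)%R)%N by rewrite size_poly_gt0.
move: (size f`_i) (size f`_j) (size (swapXY v)) => a b c.
case: a => // a; case: b => // b _ _ /=. 
case: c => [|c] /=; lia.
Qed.

Lemma size_prod_ge (K : fieldType) (s : seq {poly K}) :
  (forall p, p \in s -> (1 < size p)%N) -> (size s < size (\prod_(p <- s) p)%R)%N.
Proof.
elim: s => [|p s IH] H; first by rewrite big_nil size_poly1.
rewrite big_cons.
have Hp : (1 < size p)%N by apply: H; rewrite mem_head.
have Hs := IH (fun q Hq => H q (introT orP (or_intror Hq))).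
rewrite size_mul; last 2 first.
- by rewrite -size_poly_gt0 (ltn_trans _ Hp).
- by rewrite -size_poly_gt0 (leq_ltn_trans _ Hs).
move: Hp Hs => /=; rewrite -subn1; move: (size p) (size s) (size (\prod_(j <- s) j)%R) => a b c; lia.
Qed.

Lemma pdeg_mul_le (K : fieldType) (a b : {poly K}) :
  b != 0 -> (pdeg a <= pdeg (a * b))%N.
Proof.
have [->|anz] := eqVneq a 0; first by rewrite /pdeg size_poly0.
move=> bnz; rewrite /pdeg size_mul //.
move: (size_poly_gt0 a) (size_poly_gt0 b); rewrite anz bnz.
by case: (size a) => // x; case: (size b) => // y _ _ /=; rewrite addnS /= leq_addr.
Qed.

Lemma Lower (K : fieldType) (f : {poly {poly K}}) (s : seq {poly {poly K}}) (j : nat) :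
  f`_0 != 0 -> f`_j != 0 ->
  (forall i, (j < i)%N -> f`_i != 0 ->
     (pdeg (f`_i)%R + (i - j) * pdeg (f`_0)%R < pdeg (f`_j)%R)%N) ->
  f = \prod_(g <- s) g ->
  (forall g, g \in s -> (1 < size g)%N) ->
  (size s <= j)%N.
Proof.
move=> f0 fj Hi Hf Hs.
set w := pdeg f`_0.
have Hg : forall g, g \in s -> g`_0 != 0 /\ (pdeg (g`_0)%R <= w)%N.
  move=> g gs.
  move: f0; rewrite Hf (big_rem _ gs) /= coef0M mulf_eq0 negb_or => /andP[g0 h0].
  split=> //; rewrite /w Hf (big_rem _ gs) /= coef0M.
  by apply: pdeg_mul_le.
have HB : (size (Phi w f) <= j.+1)%N.
  apply: PhiB => // i Hij fi.
  have := Hi i Hij fi.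
  have -> : (i * w = (i - j) * w + j * w)%N by rewrite -mulnDl subnK // ltnW.
  lia.
have HP : (size s < size (Phi w f))%N.
  rewrite Hf Phi_prod -(big_map (Phi w) predT (fun p => p)).
  rewrite -(size_map (Phi w) s); apply: size_prod_ge => p /mapP [g gs ->].
  by have [g0 gw] := Hg g gs; apply: PhiA => //; apply: Hs.
by rewrite -ltnS (leq_trans HP HB).
Qed.
Definition Rv (R : comNzRingType) (N : nat) (p : {poly R}) : {poly R} :=
  \poly_(i < N.+1) p`_(N - i).

Lemma Rv_coef (R : comNzRingType) N (p : {poly R}) i :
  (Rv N p)`_i = if (i <= N)%N then p`_(N - i) else 0.
Proof. by rewrite /Rv coef_poly ltnS. Qed.

Lemma RvD (R : comNzRingType) N (p q : {poly R}) : Rv N (p + q) = Rv N p + Rv N q.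
Proof. apply/polyP => k; rewrite coefD !Rv_coef coefD. by case: (k <= N)%N; rewrite ?addr0. Qed.

Lemma Rv0 (R : comNzRingType) N : Rv N (0 : {poly R}) = 0.
Proof. by apply/polyP => k; rewrite Rv_coef !coef0; case: ifP. Qed.

Lemma RvZ (R : comNzRingType) N c (p : {poly R}) : Rv N (c *: p) = c *: Rv N p.
Proof. by apply/polyP => k; rewrite coefZ !Rv_coef coefZ; case: (k <= N)%N; rewrite ?mulr0. Qed.

Lemma RvX (R : comNzRingType) N i : (i <= N)%N -> Rv N ('X^i : {poly R}) = 'X^(N - i).
Proof.
move=> Hi; apply/polyP => k; rewrite Rv_coef !coefXn.
case: leqP => Hk.
  rewrite (_ : (N - k == i)%N = (k == N - i)%N) //; apply/idP/idP => /eqP H; apply/eqP; lia.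
by case: eqP => // H; lia.
Qed.

Lemma Rv_sum (R : comNzRingType) N (I : Type) (r : seq I) (F : I -> {poly R}) :
  Rv N (\sum_(i <- r) F i) = \sum_(i <- r) Rv N (F i).
Proof.
elim: r => [|a r IH]; first by rewrite !big_nil Rv0.
by rewrite !big_cons RvD IH.
Qed.

Lemma poly_expand (R : comNzRingType) N (p : {poly R}) :
  (size p <= N.+1)%N -> p = \sum_(i < N.+1) p`_i *: 'X^i.
Proof.
move=> Hs; rewrite -poly_def; apply/polyP => k; rewrite coef_poly.
by case: ltnP => // Hk; rewrite nth_default // (leq_trans Hs Hk).
Qed.

Lemma RvM (R : comNzRingType) N M (p q : {poly R}) :
  (size p <= N.+1)%N -> (size q <= M.+1)%N ->
  Rv (N + M) (p * q) = Rv N p * Rv M q.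
Proof.
move=> Hp Hq.
have Ep := poly_expand Hp; have Eq := poly_expand Hq.
have ERp : Rv N p = \sum_(i < N.+1) p`_i *: 'X^(N - i).
  by rewrite {1}Ep Rv_sum; apply: eq_bigr => i _; rewrite RvZ RvX // -ltnS.
have ERq : Rv M q = \sum_(i < M.+1) q`_i *: 'X^(M - i).
  by rewrite {1}Eq Rv_sum; apply: eq_bigr => i _; rewrite RvZ RvX // -ltnS.
rewrite ERp ERq {1}Ep {1}Eq !big_distrlr /= Rv_sum; apply: eq_bigr => i _.
rewrite Rv_sum; apply: eq_bigr => l _.
rewrite -!scalerAl -!scalerAr !scalerA -!exprD RvZ RvX.
  by congr (_ *: 'X^_); have := ltn_ord i; have := ltn_ord l; lia.
by have := ltn_ord i; have := ltn_ord l; lia.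
Qed.

Lemma size_prod_le (R : comNzRingType) (s : seq {poly R}) :
  (size (\prod_(p <- s) p)%R <= (\sum_(p <- s) (size p).-1).+1)%N.
Proof.
elim: s => [|a s IH]; first by rewrite !big_nil size_poly1.
rewrite !big_cons; apply: leq_trans (size_mul_leq _ _) _.
move: IH; move: (size a) (size (\prod_(p <- s) p)%R) (\sum_(p <- s) (size p).-1)%N.
move=> x y z; case: x => [|x]; case: y => [|y] /=; lia.
Qed.

Lemma size_prod_eq (R : idomainType) (s : seq {poly R}) :
  (forall p, p \in s -> p != 0) ->
  size (\prod_(p <- s) p)%R = (\sum_(p <- s) (size p).-1).+1.
Proof.
elim: s => [|a s IH] H; first by rewrite !big_nil size_poly1.
have Ha : a != 0 by apply: H; rewrite mem_head.
have Hs := IH (fun q Hq => H q (introT orP (or_intror Hq))).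
have Hnz : (\prod_(p <- s) p) != 0 by rewrite -size_poly_eq0 Hs.
rewrite !big_cons size_mul // Hs.
move: (size_poly_gt0 a); rewrite Ha; move: (size a) => x.
case: x => // x _ /=; lia.
Qed.

Lemma Rv1 (R : comNzRingType) : Rv 0 (1 : {poly R}) = 1.
Proof.
apply/polyP => k; rewrite Rv_coef !coef1; case: k => //=.
Qed.

Lemma Rv_prod (R : comNzRingType) (s : seq {poly R}) :
  Rv (\sum_(p <- s) (size p).-1)%N (\prod_(p <- s) p) = \prod_(p <- s) Rv (size p).-1 p.
Proof.
elim: s => [|a s IH]; first by rewrite !big_nil Rv1.
rewrite !big_cons RvM ?IH //; first by rewrite leqSpred.
exact: size_prod_le.
Qed.

Lemma factor0 (K : fieldType) (f : {poly {poly K}}) s g :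
  f`_0 != 0 -> f = \prod_(h <- s) h -> g \in s -> g`_0 != 0.
Proof.
move=> f0 Hf gs; move: f0; rewrite Hf (big_rem _ gs) /= coef0M mulf_eq0 negb_or.
by case/andP.
Qed.

Lemma const_unit (K : fieldType) (c : {poly K}) :
  c != 0 -> (size c <= 1)%N -> (c%:P : {poly {poly K}}) \is a GRing.unit.
Proof.
move=> c0 cs; rewrite poly_unitE size_polyC c0 /= coefC /=.
rewrite poly_unitE unitfE.
have Hc1 : size c = 1%N by apply/eqP; rewrite eqn_leq cs size_poly_gt0.
rewrite Hc1 eqxx /=.
by move: c0; rewrite -lead_coef_eq0 lead_coefE Hc1.
Qed.

Lemma small_div_unit (K : fieldType) (f b h : {poly {poly K}}) :
  (forall (c : {poly K}) (g : {poly {poly K}}), f = c%:P * g -> (size c <= 1)%N) ->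
  f = b * h -> b != 0 -> (size b <= 1)%N -> b \is a GRing.unit.
Proof.
move=> Hc Hf b0 bs.
have Eb := size1_polyC bs.
have c0 : b`_0 != 0 by apply: contra b0 => /eqP E; rewrite Eb E.
rewrite Eb; apply: const_unit => //.
by apply: (Hc _ h); rewrite Hf {1}Eb.
Qed.

Lemma exists_fact (K : fieldType) (f : {poly {poly K}}) :
  (forall (c : {poly K}) (g : {poly {poly K}}), f = c%:P * g -> (size c <= 1)%N) ->
  forall g h, f = g * h -> g != 0 -> g \isn't a GRing.unit ->
  exists s, (forall q, q \in s -> irreducible_elt q) /\ g = \prod_(q <- s) q.
Proof.
move=> Hc g h.
move: {2}(size g).+1 (ltnSn (size g)) => N; elim: N g h => [|N IH] g h //.
move=> Hs Hfg g0 gu.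
case: (Classical_Prop.classic (irreducible_elt g)) => Hirr.
  exists [:: g]; split; last by rewrite big_seq1.
  by move=> q; rewrite inE => /eqP ->.
have [a [b [Hab [au bu]]]] :
    exists a b, g = a * b /\ a \isn't a GRing.unit /\ b \isn't a GRing.unit.
  apply: Classical_Prop.NNPP => Hn; apply: Hirr; split => // a b Hab.
  apply: Classical_Prop.NNPP => Hn'; apply: Hn; exists a, b; split => //.
  by split; apply/negP => H; apply: Hn'; [left|right].
have a0 : a != 0 by apply: contra g0 => /eqP E; rewrite Hab E mul0r.
have b0 : b != 0 by apply: contra g0 => /eqP E; rewrite Hab E mulr0.
have sa : (1 < size a)%N.
  rewrite ltnNge; apply/negP => H; move/negP: au; apply.
  by apply: (small_div_unit (h := b * h) Hc) => //; rewrite Hfg Hab mulrA.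
have sb : (1 < size b)%N.
  rewrite ltnNge; apply/negP => H; move/negP: bu; apply.
  by apply: (small_div_unit (h := a * h) Hc) => //; rewrite Hfg Hab mulrA [b * a]mulrC.
have szg : size g = (size a + size b).-1 by rewrite Hab size_mul.
have [sa' [Ha Ea]] : exists s, (forall q, q \in s -> irreducible_elt q) /\ a = \prod_(q <- s) q.
  apply: (IH a (b * h)) => //; last by rewrite Hfg Hab mulrA.
  move: Hs; rewrite szg; move: (size a) (size b) sa sb => x y; case: x => // x; case: y => // y /=; lia.
have [sb' [Hb Eb]] : exists s, (forall q, q \in s -> irreducible_elt q) /\ b = \prod_(q <- s) q.
  apply: (IH b (a * h)) => //; last by rewrite Hfg Hab mulrA [b * a]mulrC.
  move: Hs; rewrite szg; move: (size a) (size b) sa sb => x y; case: x => // x; case: y => // y /=; lia.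
exists (sa' ++ sb'); split; last by rewrite big_cat /= -Ea -Eb.
by move=> q; rewrite mem_cat => /orP [] ?; [apply: Ha|apply: Hb].
Qed.

Theorem theorem8 (K : fieldType) (n : nat) (f : {poly {poly K}}) (j : nat) :
  (2 <= n)%N ->
  size f = n.+1 ->
  f`_0 != 0 ->
  f`_n != 0 ->
  (forall (c : {poly K}) (g : {poly {poly K}}), f = c%:P * g -> (size c <= 1)%N) ->
  (1 <= j)%N -> (j <= n - 1)%N ->
  (forall i : nat, (i < j)%N -> f`_i != 0 ->
     (pdeg (f`_i)%R + (j - i) * pdeg (f`_n)%R < pdeg (f`_j)%R)%N) ->
  (forall i : nat, (j < i)%N -> (i <= n)%N -> f`_i != 0 ->
     (pdeg (f`_i)%R + (i - j) * pdeg (f`_0)%R < pdeg (f`_j)%R)%N) ->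
  prod_at_most_irr (minn j (n - j)) f /\
  ((j = 1 \/ j = n - 1)%N -> irreducible_elt f).
Proof.
move=> n2 sf f0 fn Hc j1 jn H1 H2.
have fnz : f != 0 by rewrite -size_poly_eq0 sf.
have fnu : f \isn't a GRing.unit by rewrite poly_unitE sf; case: n n2 {sf H1 H2 jn fn} => [|[|]].
have [s [Hirr Hfs]] := exists_fact Hc (esym (mulr1 f)) fnz fnu.
have Hsz : forall q, q \in s -> (1 < size q)%N.
  move=> q qs; have [q0 qu _] := Hirr q qs.
  rewrite ltnNge; apply/negP => H; move/negP: qu; apply.
  by apply: (small_div_unit Hc) H => //; rewrite Hfs (big_rem _ qs).
have jn' : (j < n)%N by lia.
have fj : f`_j != 0.
  apply/eqP => E; have := H2 n jn' (leqnn n) fn; by rewrite E /pdeg size_poly0 /= ltn0.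
have L1 : (size s <= j)%N.
  apply: (Lower f0 fj _ Hfs Hsz) => i Hij fi.
  case: (leqP i n) => Hin; first by apply: H2.
  by move: fi; rewrite nth_default ?eqxx // sf.
have L2 : (size s <= n - j)%N.
  have Hn : n = (\sum_(g <- s) (size g).-1)%N.
    apply/eqP; rewrite -eqSS -sf {1}Hfs size_prod_eq // => p ps.
    by rewrite -size_poly_gt0 ltnW // Hsz.
  have Hrf : Rv n f = \prod_(p <- map (fun g : {poly {poly K}} => Rv (size g).-1 g) s) p.
    by rewrite big_map {1}Hn {1}Hfs Rv_prod.
  rewrite -(size_map (fun g : {poly {poly K}} => Rv (size g).-1 g) s).
  apply: (Lower (f := Rv n f) (j := n - j)) Hrf _.
  - by rewrite Rv_coef leq0n subn0.
  - by rewrite Rv_coef leq_subr subKn // ltnW.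
  - move=> i Hi; rewrite !Rv_coef leq0n subn0 leq_subr subKn ?(ltnW jn') //.
    case: (leqP i n) => Hin; last by rewrite eqxx.
    move=> fi.
    have Hlt : (n - i < j)%N by lia.
    have := H1 (n - i)%N Hlt fi.
    by have -> : (j - (n - i) = i - (n - j))%N by lia.
  - move=> p /mapP [g gs ->].
    have g0 := factor0 f0 Hfs gs.
    have Hg := Hsz g gs.
    have : (Rv (size g).-1 g)`_(size g).-1 != 0 by rewrite Rv_coef leqnn subnn.
    apply: contraNT; rewrite -leqNgt => H; rewrite nth_default //.
    by apply: leq_trans H _; rewrite -ltnS prednK // ltnW.
split.
  by exists s; split => //; rewrite leq_min L1 L2.
move=> Hj.
have Hle : (size s <= 1)%N by case: Hj => Hj; [rewrite -Hj | ]; lia.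
move: Hle Hirr Hfs; case: s {Hsz L1 L2} => [|q [|q' s']] //=.
  by rewrite big_nil => _ _ E; move: fnu; rewrite E unitr1.
by move=> _ Hq; rewrite big_seq1 => ->; apply: Hq; rewrite mem_head.
Qed.
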